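(* Let $P$ and $Q$ be irreducible transition matrices on the finite set $S$, both reversible with respect to $\pi$. Then $P$ efficiency-dominates $Q$ if and only if the matrix $Q-P$ has all eigenvalues non-negative, which holds if and only if the matrix $D(Q-P)$ has all eigenvalues non-negative, where $D=\mathrm{diag}(\pi)$.
   Context: $S$ is a finite set with $|S|=n$, identified with $\{1,\dots,n\}$, and $\pi$ is a probability distribution on $S$ with $\pi(x)>0$ for all $x$; $D=\mathrm{diag}(\pi(1),\dots,\pi(n))$. A transition matrix $P$ (nonnegative entries, rows summing to 1) acts on functions by $(Pf)(x)=\sum_y P(x,y)f(y)$. $P$ is reversible with respect to $\pi$ if $\pi(x)P(x,y)=\pi(y)P(y,x)$ for all $x,y$; irreducible if every state can be reached from every other with positive probability in some number of steps. For a Markov chain $X_1,X_2,\dots$ with transition matrix $P$ and $X_1\sim\pi$, $v(f,P)=\lim_{N\to\infty}\frac1N\mathrm{Var}\big(\sum_{i=1}^N f(X_i)\big)$. $P$ efficiency-dominates $Q$ if $v(f,P)\le v(f,Q)$ for all $f:S\to\mathbb R$. *)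

(* Defs.v *)
From HB Require Import structures.
From mathcomp Require Import all_boot all_order all_algebra.
From mathcomp Require Import all_classical all_reals.
From mathcomp Require Import topology normedtype sequences.
From mathcomp.real_closed Require Import complex.

Set Implicit Arguments.
Unset Strict Implicit.
Unset Printing Implicit Defensive.

Import Order.TTheory GRing.Theory Num.Theory.
Import numFieldNormedType.Exports.
Local Open Scope ring_scope.

Section MarkovDefs.
Variables (R : realType) (n : nat).

Definition positive_distribution (pi : 'I_n -> R) : Prop :=
  (forall x, 0 < pi x) /\ \sum_(x < n) pi x = 1.

Definition transition_matrix (P : 'M[R]_n) : Prop :=
  (forall x y, 0 <= P x y) /\ (forall x, \sum_(y < n) P x y = 1).

Definition reversible (pi : 'I_n -> R) (P : 'M[R]_n) : Prop :=
  forall x y, pi x * P x y = pi y * P y x.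

Definition irreducible (P : 'M[R]_n) : Prop :=
  forall x y, exists k : nat, 0 < (P ^+ k) x y.

(* Law of (X_1,...,X_N) for the chain started at pi:
   Pr(X_1 = w_0, ..., X_N = w_{N-1}) = pi(w_0) prod_k P(w_k, w_{k+1}). *)
Definition path_prob (pi : 'I_n -> R) (P : 'M[R]_n) (N : nat)
    (w : N.-tuple 'I_n) : R :=
  if tval w is x :: _ then
    pi x * \prod_(k < N.-1) P (nth x w k) (nth x w k.+1)
  else 1.

Definition path_expect (pi : 'I_n -> R) (P : 'M[R]_n) (N : nat)
    (g : N.-tuple 'I_n -> R) : R :=
  \sum_(w : N.-tuple 'I_n) path_prob pi P w * g w.

Definition var_partial_sum (pi : 'I_n -> R) (P : 'M[R]_n) (f : 'I_n -> R)
    (N : nat) : R :=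
  let S := fun w : N.-tuple 'I_n => \sum_(x <- w) f x in
  path_expect pi P (fun w => S w ^+ 2) - (path_expect pi P S) ^+ 2.

Definition asymp_var (pi : 'I_n -> R) (P : 'M[R]_n) (f : 'I_n -> R) : R :=
  limn (fun N : nat => var_partial_sum pi P f N / N%:R).

Definition efficiency_dominates (pi : 'I_n -> R) (P Q : 'M[R]_n) : Prop :=
  forall f : 'I_n -> R, asymp_var pi P f <= asymp_var pi Q f.

(* all (complex) eigenvalues of the real matrix A are real and non-negative *)
Definition eigenvalues_nonneg (A : 'M[R]_n) : Prop :=
  forall a : R[i], eigenvalue (map_mx (fun x : R => (x%:C)%C) A) a -> 0 <= a.

Definition diag_of (pi : 'I_n -> R) : 'M[R]_n := diag_mx (\row_i pi i).

End MarkovDefs.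

(* Main.v *)
Require Import Defs.
From HB Require Import structures.
From mathcomp Require Import all_boot all_order all_algebra.
From mathcomp Require Import all_classical all_reals.
From mathcomp Require Import topology normedtype sequences.
From mathcomp.real_closed Require Import complex.
From mathcomp Require Import ring lra zify.
Import Order.TTheory GRing.Theory Num.Theory.
Import numFieldNormedType.Exports.
Local Open Scope ring_scope.
From mathcomp Require Import spectral sesquilinear.
Section Chain.
Variables (R : realType) (n : nat) (P : 'M[R]_n).

Definition app (M : 'M[R]_n) (g : 'I_n -> R) x := \sum_y M x y * g y.

Lemma sum_tuple_cons (N : nat) (F : N.+1.-tuple 'I_n -> R) :
  \sum_(w : N.+1.-tuple 'I_n) F w =
  \sum_x \sum_(t : N.-tuple 'I_n) F (cons_tuple x t).
Proof.
rewrite pair_big /=.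
rewrite (reindex (fun p : 'I_n * N.-tuple 'I_n => cons_tuple p.1 p.2)) //=.
exists (fun w : N.+1.-tuple 'I_n => (thead w, [tuple of behead w])).
  move=> [x t] _ /=; congr (_, _); by apply: val_inj.
move=> w _ /=; by rewrite [RHS]tuple_eta.
Qed.

Lemma prob_cons mu N x (t : N.-tuple 'I_n) :
  path_prob mu P (cons_tuple x t) = mu x * path_prob (fun y => P x y) P t.
Proof.
rewrite /path_prob /=.
case: t => [[|y s] /= Hs].
  by move/eqP: Hs => <-; rewrite big_ord0.
have HN : N = (size s).+1 by move/eqP: Hs => <-.
subst N => /=.
rewrite big_ord_recl /=; congr (_ * (_ * _)).
apply: eq_bigr => k _ /=; rewrite add0n.
rewrite (@set_nth_default _ (y :: s) y x); last by rewrite /= ltnS ltnW.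
by rewrite (@set_nth_default _ s y x).
Qed.

Lemma E_cons mu N (G : N.+1.-tuple 'I_n -> R) : path_expect mu P G =
  \sum_x mu x * path_expect (fun y => P x y) P (fun t => G (cons_tuple x t)).
Proof.
rewrite /path_expect sum_tuple_cons; apply: eq_bigr => x _.
rewrite mulr_sumr; apply: eq_bigr => t _; by rewrite prob_cons mulrA.
Qed.

Lemma E0 mu (G : 0.-tuple 'I_n -> R) : path_expect mu P G = G [tuple].
Proof.
rewrite /path_expect (eq_bigr (fun _ => G [tuple])); last first.
  by move=> w _; rewrite (tuple0 w) /= mul1r.
by rewrite sumr_const card_tuple expn0.
Qed.

Lemma E_add mu N (G H : N.-tuple 'I_n -> R) : path_expect mu P (fun t => G t + H t) =
  path_expect mu P G + path_expect mu P H.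
Proof. by rewrite /path_expect -big_split; apply: eq_bigr => w _; rewrite mulrDr. Qed.

Lemma E_scale mu N c (G : N.-tuple 'I_n -> R) : path_expect mu P (fun t => c * G t) =
  c * path_expect mu P G.
Proof. rewrite /path_expect mulr_sumr; apply: eq_bigr => w _; by rewrite mulrCA. Qed.

Lemma E_ext mu N (G H : N.-tuple 'I_n -> R) : (forall t, G t = H t) ->
  path_expect mu P G = path_expect mu P H.
Proof. by move=> e; apply: eq_bigr => w _; rewrite e. Qed.

Hypothesis P_ge0 : forall x y, 0 <= P x y.
Hypothesis P_row : forall x, \sum_y P x y = 1.

Lemma E1 N mu : \sum_x mu x = 1 -> path_expect mu P (fun _ : N.-tuple 'I_n => 1) = 1.
Proof.
elim: N mu => [|N IH] mu Hmu; first by rewrite E0.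
rewrite E_cons -[RHS]Hmu; apply: eq_bigr => x _; by rewrite IH ?mulr1.
Qed.

Lemma E_const N mu c (G : N.-tuple 'I_n -> R) : \sum_x mu x = 1 ->
  path_expect mu P (fun t => c + G t) = c + path_expect mu P G.
Proof.
move=> H; rewrite E_add; congr (_ + _).
transitivity (c * path_expect mu P (fun _ : N.-tuple 'I_n => 1)); last by rewrite (@E1 N mu H) mulr1.
by rewrite -E_scale; apply: E_ext => t; rewrite mulr1.
Qed.

Variable f : 'I_n -> R.
Definition Sf N (t : N.-tuple 'I_n) := \sum_(x <- t) f x.
Arguments Sf {N} t.

Lemma Sf_cons N x (t : N.-tuple 'I_n) : Sf (cons_tuple x t) = f x + Sf t.
Proof. by rewrite /Sf /= big_cons. Qed.

Definition AA N x := path_expect (fun y => P x y) P (@Sf N).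
Definition VV N x := path_expect (fun y => P x y) P (fun t : N.-tuple 'I_n => (@Sf N t) ^+ 2).

Lemma AA0 x : AA 0 x = 0.
Proof. by rewrite /AA E0 /Sf big_nil. Qed.

Lemma AAS N x : AA N.+1 x = app P (fun y => f y + AA N y) x.
Proof.
rewrite /AA E_cons /app; apply: eq_bigr => y _; congr (_ * _).
rewrite -E_const //; apply: E_ext => t; by rewrite Sf_cons.
Qed.

Lemma E_cons_sq N mu : path_expect mu P (fun t : N.+1.-tuple 'I_n => (@Sf N.+1 t) ^+ 2) =
  \sum_x mu x * (f x ^+ 2 + 2 * f x * AA N x + VV N x).
Proof.
rewrite E_cons; apply: eq_bigr => x _; congr (_ * _).
rewrite /AA /VV -E_scale -addrA -E_add -E_const //.
apply: E_ext => t; rewrite Sf_cons; ring.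
Qed.

Lemma E_cons_S N mu : path_expect mu P (@Sf N.+1) =
  \sum_x mu x * (f x + AA N x).
Proof.
rewrite E_cons; apply: eq_bigr => x _; congr (_ * _).
rewrite /AA -E_const //; apply: E_ext => t; by rewrite Sf_cons.
Qed.

Variable pi : 'I_n -> R.
Hypothesis pi_sum : \sum_x pi x = 1.
Hypothesis stat : forall y, \sum_x pi x * P x y = pi y.

Lemma stat_app g : \sum_x pi x * app P g x = \sum_x pi x * g x.
Proof.
rewrite /app (eq_bigr (fun x => \sum_y pi x * P x y * g y)); last first.
  by move=> x _; rewrite mulr_sumr; apply: eq_bigr => y _; rewrite mulrA.
rewrite exchange_big /=; apply: eq_bigr => y _; by rewrite -mulr_suml stat.
Qed.

Lemma E_stat N (G : N.-tuple 'I_n -> R) : \sum_x pi x * path_expect (fun y => P x y) P G =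
  path_expect pi P G.
Proof.
case: N G => [|N] G.
  by rewrite (eq_bigr (fun x => pi x * G [tuple])) ?E0 -?mulr_suml ?pi_sum ?mul1r // => x _; rewrite E0.
rewrite E_cons (eq_bigr (fun x => pi x * app P (fun y =>
   path_expect (fun z => P y z) P (fun t => G (cons_tuple y t))) x)).
  by rewrite stat_app.
by move=> x _; rewrite E_cons.
Qed.


Definition ip (u v : 'I_n -> R) := \sum_x pi x * u x * v x.
Hypothesis rev : forall x y, pi x * P x y = pi y * P y x.
Hypothesis pi_ge0 : forall x, 0 <= pi x.

Lemma ip_app u v : ip (app P u) v = ip u (app P v).
Proof.
rewrite /ip /app.
transitivity (\sum_x \sum_y pi x * P x y * u y * v x).
  apply: eq_bigr => x _; rewrite mulr_sumr mulr_suml; apply: eq_bigr => y _; ring.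
rewrite exchange_big; apply: eq_bigr => y _ /=; rewrite mulr_sumr.
apply: eq_bigr => x _; rewrite rev; ring.
Qed.

Lemma ip_ext u u' v v' : (forall x, u x = u' x) -> (forall x, v x = v' x) ->
  ip u v = ip u' v'.
Proof. by move=> e1 e2; apply: eq_bigr => x _; rewrite e1 e2. Qed.

Lemma ip_subl u u' v : ip (fun x => u x - u' x) v = ip u v - ip u' v.
Proof. rewrite /ip -sumrB; apply: eq_bigr => x _; ring. Qed.

Lemma ip_subr u v v' : ip u (fun x => v x - v' x) = ip u v - ip u v'.
Proof. rewrite /ip -sumrB; apply: eq_bigr => x _; ring. Qed.

Lemma ip_sym u v : ip u v = ip v u.
Proof. apply: eq_bigr => x _; ring. Qed.

Lemma app_sub u v x : app P (fun y => u y - v y) x = app P u x - app P v x.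
Proof. rewrite /app -sumrB; apply: eq_bigr => y _; ring. Qed.

Lemma app_ext u v x : (forall y, u y = v y) -> app P u x = app P v x.
Proof. by move=> e; apply: eq_bigr => y _; rewrite e. Qed.

Definition it k g := iter k (app P) g.

Section Poisson.
Variable g : 'I_n -> R.
Hypothesis Hg : forall x, g x - app P g x = f x.

Lemma AA_closed N x : AA N x = it 1 g x - it N.+1 g x.
Proof.
elim: N x => [|N IH] x; first by rewrite AA0 subrr.
rewrite AAS (@app_ext _ (fun y => g y - it N.+1 g y)); last first.
  by move=> y; rewrite IH -Hg /=; ring.
by rewrite app_sub.
Qed.

Lemma ip_f_it k : ip f (it k.+1 g) = ip g (it k.+1 g) - ip g (it k.+2 g).
Proof.
rewrite (@ip_ext f (fun x => g x - app P g x) (it k.+1 g) (it k.+1 g)) //.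
by rewrite ip_subl ip_app.
Qed.

Lemma e_rec N : path_expect pi P (fun t : N.+1.-tuple 'I_n => Sf t ^+ 2) =
  path_expect pi P (fun t : N.-tuple 'I_n => Sf t ^+ 2) + ip f f + 2 * ip f (AA N).
Proof.
rewrite E_cons_sq -E_stat /VV /ip mulr_sumr -!big_split; apply: eq_bigr => x _ /=.
ring.
Qed.

Lemma e_closed N : path_expect pi P (fun t : N.-tuple 'I_n => Sf t ^+ 2) =
  N%:R * (ip f f + 2 * ip f (it 1 g)) - 2 * (ip g (it 1 g) - ip g (it N.+1 g)).
Proof.
elim: N => [|N IH].
  by rewrite E0 /Sf big_nil expr0n /= mul0r subrr mulr0 subrr.
rewrite e_rec IH (@ip_ext f f (AA N) (fun x => it 1 g x - it N.+1 g x)) //; last first.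
  by move=> x; rewrite AA_closed.
rewrite ip_subr (ip_f_it N) -natr1; ring.
Qed.

End Poisson.

Hypothesis Hf : \sum_x pi x * f x = 0.

Lemma sum_AA N : \sum_x pi x * AA N x = 0.
Proof.
elim: N => [|N IH].
  by rewrite big1 // => x _; rewrite AA0 mulr0.
rewrite (eq_bigr (fun x => pi x * app P (fun y => f y + AA N y) x)); last first.
  by move=> x _; rewrite AAS.
rewrite stat_app (eq_bigr (fun x => pi x * f x + pi x * AA N x)).
  by rewrite big_split /= Hf IH addr0.
by move=> x _; rewrite mulrDr.
Qed.

Lemma m_zero N : path_expect pi P (@Sf N) = 0.
Proof.
case: N => [|N]; first by rewrite E0 /Sf big_nil.
rewrite E_cons_S (eq_bigr (fun x => pi x * f x + pi x * AA N x)).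
  by rewrite big_split /= Hf sum_AA addr0.
by move=> x _; rewrite mulrDr.
Qed.

Lemma it_bound g k x : `|it k g x| <= \sum_y `|g y|.
Proof.
elim: k x => [|k IH] x /=.
  rewrite (bigD1 x) //= lerDl; exact: sumr_ge0.
rewrite /app; apply: (le_trans (ler_norm_sum _ _ _)).
apply: (@le_trans _ _ (\sum_y P x y * \sum_y `|g y|)).
  apply: ler_sum => y _; rewrite normrM ger0_norm //; apply: ler_wpM2l => //.
by rewrite -mulr_suml P_row mul1r.
Qed.

Lemma ip_bound g k : `|ip g (it k g)| <= \sum_x pi x * `|g x| * \sum_y `|g y|.
Proof.
rewrite /ip; apply: (le_trans (ler_norm_sum _ _ _)); apply: ler_sum => x _.
rewrite normrM normrM (ger0_norm (pi_ge0 x)); apply: ler_wpM2l.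
  by apply: mulr_ge0.
exact: it_bound.
Qed.

Lemma asymp_closed g (Hg : forall x, g x - app P g x = f x) :
  asymp_var pi P f = ip f f + 2 * ip f (it 1 g).
Proof.
set C := ip f f + 2 * ip f (it 1 g).
set B := \sum_x pi x * `|g x| * \sum_y `|g y|.
set K := 2 * (`|ip g (it 1 g)| + B).
have HK : 0 <= K.
  rewrite /K; apply: mulr_ge0 => //; apply: addr_ge0 => //.
  apply: sumr_ge0 => x _; apply: mulr_ge0; [apply: mulr_ge0 => //| exact: sumr_ge0].
have Hvar N : var_partial_sum pi P f N =
    N%:R * C - 2 * (ip g (it 1 g) - ip g (it N.+1 g)).
  have -> : var_partial_sum pi P f N = path_expect pi P (fun t : N.-tuple 'I_n => Sf t ^+ 2)
     - (path_expect pi P (@Sf N)) ^+ 2 by [].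
  by rewrite m_zero expr0n /= subr0 (@e_closed g Hg).
apply: (cvg_lim (@Rhausdorff R)).
apply/cvgrPdist_le => eps eps_gt0.
near=> N.
have N_gt0 : (0 < N)%N by near: N; exact: nbhs_infty_gt.
have NR : (0 : R) < N%:R by rewrite ltr0n.
have HN : K / eps <= N%:R by near: N; exact: nbhs_infty_ger.
rewrite Hvar.
have -> : C - (N%:R * C - 2 * (ip g (it 1 g) - ip g (it N.+1 g))) / N%:R =
   2 * (ip g (it 1 g) - ip g (it N.+1 g)) / N%:R.
  by field; rewrite lt0r_neq0.
rewrite normrM normfV (gtr0_norm NR) ler_pdivrMr //.
apply: (@le_trans _ _ K).
  rewrite normrM ger0_norm // /K ler_wpM2l //.
  apply: (le_trans (ler_normB _ _)); apply: lerD => //; exact: ip_bound.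
by rewrite -ler_pdivrMl // mulrC.
Unshelve. all: by end_near.
Qed.

End Chain.

Section Main.
Variables (R : realType) (n : nat) (pi : 'I_n -> R).
Hypothesis pi_pos : forall x, 0 < pi x.
Hypothesis pi_sum : \sum_x pi x = 1.

Lemma pi_ge0' x : 0 <= pi x. Proof. exact: ltW. Qed.

Lemma sum_delta (u : 'I_n -> R) x : \sum_j u j * (j == x)%:R = u x.
Proof.
rewrite (bigD1 x) //= eqxx mulr1 big1 ?addr0 // => j /negbTE ->; by rewrite mulr0.
Qed.

Section OneChain.
Variable P : 'M[R]_n.
Hypothesis P_ge0 : forall x y, 0 <= P x y.
Hypothesis P_row : forall x, \sum_y P x y = 1.
Hypothesis P_irr : irreducible P.
Hypothesis P_rev : reversible pi P.

Lemma P_stat y : \sum_x pi x * P x y = pi y.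
Proof.
rewrite (eq_bigr (fun x => pi y * P y x)); last by move=> x _; rewrite P_rev.
by rewrite -mulr_sumr P_row mulr1.
Qed.

Lemma pow_app h : (forall x, app R n P h x = h x) ->
  forall k x, app R n (P ^+ k) h x = h x.
Proof.
move=> Hh; elim=> [|k IH] x.
  rewrite /app expr0 (eq_bigr (fun y => h y * (y == x)%:R)) ?sum_delta //.
  by move=> y _; rewrite !mxE mulrC eq_sym.
rewrite /app exprS -mulmxE.
transitivity (\sum_z P x z * app R n (P ^+ k) h z); last first.
  by rewrite -[RHS]Hh; apply: eq_bigr => z _; rewrite IH.
rewrite /app (eq_bigr (fun y => \sum_z P x z * (P ^+ k) z y * h y)); last first.
  by move=> y _; rewrite mxE mulr_suml.
rewrite exchange_big; apply: eq_bigr => z _ /=; rewrite mulr_sumr.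
by apply: eq_bigr => y _; rewrite mulrA.
Qed.

Lemma pow_ge0 k x y : 0 <= (P ^+ k) x y.
Proof.
elim: k x y => [|k IH] x y; first by rewrite expr0 mxE; case: (x == y).
rewrite exprS -mulmxE mxE; apply: sumr_ge0 => z _; exact: mulr_ge0.
Qed.

Lemma pow_row k x : \sum_y (P ^+ k) x y = 1.
Proof.
have := @pow_app (fun _ => 1) _ k x; rewrite /app.
under eq_bigr do rewrite mulr1; apply.
by move=> z; rewrite /app; under eq_bigr do rewrite mulr1; exact: P_row.
Qed.

Lemma kernel_const h : (forall x, app R n P h x = h x) -> forall x y, h x = h y.
Proof.
move=> Hh x y.
case: (@arg_maxP _ _ _ x predT h isT) => m _ Hm.
suff E z : h z = h m by rewrite !E.
have [k Hk] := P_irr m z.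
have Hsum : \sum_w (P ^+ k) m w * (h m - h w) = 0.
  rewrite (eq_bigr (fun w => h m * (P ^+ k) m w - (P ^+ k) m w * h w)); last first.
    by move=> w _; ring.
  rewrite sumrB -mulr_sumr pow_row mulr1.
  by have := @pow_app h Hh k m; rewrite /app => ->; rewrite subrr.
have Hz : (P ^+ k) m z * (h m - h z) = 0.
  apply: (psumr_eq0P _ Hsum) => // w _; apply: mulr_ge0; first exact: pow_ge0.
  by rewrite subr_ge0; apply: Hm.
move: Hz => /eqP; rewrite mulf_eq0 => /orP [/eqP H0 | ].
  by rewrite H0 ltxx in Hk.
by rewrite subr_eq0 => /eqP.
Qed.


Lemma poisson (phi : 'I_n -> R) : \sum_x pi x * phi x = 0 ->
  exists g, forall x, g x - app R n P g x = phi x.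
Proof.
move=> Hphi.
have i0 : 'I_n.
  move: pi_sum; case: (n) pi => [|k] p.
    by rewrite big_ord0 => /eqP; rewrite eq_sym oner_eq0.
  by move=> _; exact: ord0.
pose Lt : 'M[R]_n := \matrix_(i, j) ((i == j)%:R - P j i).
have LtE (u : 'rV[R]_n) x : (u *m Lt) 0 x = u 0 x - app R n P (fun j => u 0 j) x.
  rewrite mxE /app (eq_bigr (fun j => u 0 j * (j == x)%:R - P x j * u 0 j)).
    by rewrite sumrB sum_delta.
  by move=> j _; rewrite mxE; ring.
pose cpi : 'cV[R]_n := \col_i pi i.
pose H := kermx cpi.
have LtH : (Lt <= H)%MS.
  rewrite sub_kermx; apply/eqP/matrixP => i j; rewrite !mxE.
  rewrite (eq_bigr (fun k => pi k * (k == i)%:R - pi k * P k i)).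
    by rewrite sumrB sum_delta P_stat subrr.
  by move=> k _; rewrite !mxE eq_sym; ring.
have rk1 : (n - \rank Lt <= 1)%N.
  rewrite -mxrank_ker.
  apply: (leq_trans (@mxrankS _ _ _ _ _ (const_mx 1 : 'rV[R]_n) _)); last exact: rank_leq_row.
  apply/row_subP => i.
  set u := row i (kermx Lt).
  have Hu : u *m Lt = 0 by rewrite /u -row_mul mulmx_ker row0.
  have Hc : forall x, app R n P (fun j => u 0 j) x = u 0 x.
    move=> x; have := LtE u x; rewrite Hu mxE => /eqP; rewrite eq_sym subr_eq0 => /eqP.
    by [].
  have -> : u = u 0 i0 *: const_mx 1.
    apply/matrixP => a b; rewrite [RHS]mxE [X in _ * X]mxE mulr1 (ord1 a).
    exact: (@kernel_const (fun j => u 0 j) Hc b i0).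
  by apply: scalemx_sub.
have rkH : (\rank H <= n - 1)%N.
  rewrite mxrank_ker; apply: leq_sub2l.
  rewrite lt0n mxrank_eq0; apply/eqP => /matrixP /(_ i0 0).
  by rewrite !mxE => E; have := pi_pos i0; rewrite E ltxx.
have HLt : (H <= Lt)%MS.
  have := mxrank_leqif_eq LtH => -[_ E].
  suff : (Lt == H)%MS by case/andP.
  rewrite -E eqn_leq mxrankS //=.
  move: rk1 rkH (rank_leq_row Lt); clear; lia.
have : ((\row_i phi i) <= Lt)%MS.
  apply: submx_trans HLt; rewrite sub_kermx; apply/eqP/matrixP => a b.
  rewrite !mxE -[RHS]Hphi; apply: eq_bigr => k _; rewrite !mxE; ring.
case/submxP => D HD.
exists (fun j => D 0 j) => x.
by rewrite -LtE -HD mxE.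
Qed.

Lemma seq_shift (f : 'I_n -> R) c (s : seq 'I_n) :
  \sum_(x <- s) (f x - c) = \sum_(x <- s) f x - (size s)%:R * c.
Proof.
elim: s => [|a s IH]; first by rewrite !big_nil mul0r subr0.
by rewrite !big_cons IH /= -natr1; ring.
Qed.

Lemma var_shift f c N : var_partial_sum pi P f N = var_partial_sum pi P (fun x => f x - c) N.
Proof.
rewrite /var_partial_sum /=.
set a := N%:R * c.
have e1 : path_expect pi P (fun w : N.-tuple 'I_n => (\sum_(x <- w) (f x - c)) ^+ 2) =
   a ^+ 2 + (- (2 * a) * path_expect pi P (fun w : N.-tuple 'I_n => \sum_(x <- w) f x)
     + path_expect pi P (fun w : N.-tuple 'I_n => (\sum_(x <- w) f x) ^+ 2)).
  rewrite -E_scale -E_add -(@E_const R n P P_row) //; apply: E_ext => w.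
  rewrite seq_shift size_tuple /a; ring.
have e2 : path_expect pi P (fun w : N.-tuple 'I_n => \sum_(x <- w) (f x - c)) =
   - a + path_expect pi P (fun w : N.-tuple 'I_n => \sum_(x <- w) f x).
  rewrite -(@E_const R n P P_row) //; apply: E_ext => w.
  rewrite seq_shift size_tuple /a; ring.
rewrite e1 e2; ring.
Qed.

Lemma asymp_shift f c : asymp_var pi P f = asymp_var pi P (fun x => f x - c).
Proof.
rewrite /asymp_var.
have -> : (fun N => var_partial_sum pi P f N / N%:R) =
  (fun N => var_partial_sum pi P (fun x => f x - c) N / N%:R).
  by apply: funext => N; rewrite (var_shift f c).
by [].
Qed.

Lemma psd u : 0 <= ip R n pi (fun x => u x - app R n P u x) u.
Proof.
have T0 : 0 <= \sum_x \sum_y pi x * P x y * (u x - u y) ^+ 2.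
  apply: sumr_ge0 => x _; apply: sumr_ge0 => y _; apply: mulr_ge0.
    by apply: mulr_ge0; [exact: pi_ge0' | exact: P_ge0].
  exact: sqr_ge0.
set X := \sum_x \sum_y pi x * P x y * u y * u x.
set Y := \sum_x pi x * u x ^+ 2.
have E1 : \sum_x \sum_y pi x * P x y * u x ^+ 2 = Y.
  apply: eq_bigr => x _; rewrite -mulr_suml -mulr_sumr P_row; ring.
have E2 : \sum_x \sum_y pi x * P x y * u y ^+ 2 = Y.
  rewrite exchange_big; apply: eq_bigr => y _ /=; rewrite -mulr_suml P_stat //.
have E3 : \sum_x \sum_y pi x * P x y * (u x - u y) ^+ 2 = Y + Y - 2 * X.
  rewrite -{1}E1 -E2 /X mulr_sumr -!big_split -sumrB; apply: eq_bigr => x _ /=.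
  rewrite mulr_sumr -!big_split -sumrB; apply: eq_bigr => y _ /=; ring.
have E4 : ip R n pi (fun x => u x - app R n P u x) u = Y - X.
  rewrite /ip /Y /X -sumrB; apply: eq_bigr => x _; rewrite /app mulrBr mulrBl.
  rewrite mulr_sumr mulr_suml; congr (_ - _); first ring.
  by apply: eq_bigr => y _; ring.
rewrite E4; rewrite E3 in T0; lra.
Qed.

Lemma vformula phi g : \sum_x pi x * phi x = 0 ->
  (forall x, g x - app R n P g x = phi x) ->
  asymp_var pi P phi = 2 * ip R n pi phi g - ip R n pi phi phi.
Proof.
move=> Hphi Hg.
rewrite (@asymp_closed R n P P_ge0 P_row phi pi pi_sum P_stat P_rev pi_ge0' Hphi g Hg).
rewrite (@ip_ext R n pi phi phi (it R n P 1 g) (fun x => g x - phi x)) //.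
  rewrite ip_subr; ring.
by move=> x; rewrite /= -Hg; ring.
Qed.

End OneChain.

Lemma Lsym (P : 'M[R]_n) (P_rev : reversible pi P) u v :
  ip R n pi (fun x => u x - app R n P u x) v = ip R n pi u (fun x => v x - app R n P v x).
Proof. by rewrite ip_subl ip_subr (@ip_app R n P pi P_rev). Qed.

Lemma L_sub (P : 'M[R]_n) u a x :
  (fun x => u x - a x) x - app R n P (fun x => u x - a x) x =
  (u x - app R n P u x) - (a x - app R n P a x).
Proof. rewrite app_sub /=; ring. Qed.

Lemma form_diff (P Q : 'M[R]_n) u :
  \sum_x \sum_y u x * (pi x * (Q x y - P x y)) * u y =
  ip R n pi (fun x => u x - app R n P u x) u - ip R n pi (fun x => u x - app R n Q u x) u.
Proof.
rewrite -ip_subl /ip; apply: eq_bigr => x _; rewrite /app.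
have -> : u x - \sum_y P x y * u y - (u x - \sum_y Q x y * u y) =
  \sum_y (Q x y * u y - P x y * u y) by rewrite sumrB; ring.
rewrite mulr_sumr mulr_suml; by apply: eq_bigr => y _; ring.
Qed.

Lemma dom_iff (P Q : 'M[R]_n) :
  (forall x y, 0 <= P x y) -> (forall x, \sum_y P x y = 1) -> irreducible P -> reversible pi P ->
  (forall x y, 0 <= Q x y) -> (forall x, \sum_y Q x y = 1) -> irreducible Q -> reversible pi Q ->
  efficiency_dominates pi P Q <->
  forall u, 0 <= \sum_x \sum_y u x * (pi x * (Q x y - P x y)) * u y.
Proof.
move=> P0 P1 Pi Pr Q0 Q1 Qi Qr; split.
- move=> Hdom u; rewrite form_diff.
  set phi := fun x => u x - app R n Q u x.
  have Hphi : \sum_x pi x * phi x = 0.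
    rewrite /phi (eq_bigr (fun x => pi x * u x - pi x * app R n Q u x)); last by move=> x _; ring.
    by rewrite sumrB (@stat_app R n Q pi (P_stat Q Q1 Qr)) subrr.
  have [a Ha] := poisson P P0 P1 Pi Pr _ Hphi.
  have := Hdom phi.
  rewrite (vformula P P0 P1 Pr _ _ Hphi Ha) (@vformula Q Q0 Q1 Qr phi u Hphi) // => Hle.
  have Hps := psd P P0 P1 Pr (fun x => u x - a x).
  rewrite (@ip_ext R n pi _ (fun x => (u x - app R n P u x) - phi x) _ (fun x => u x - a x))
    in Hps; last by []; last by move=> x; rewrite L_sub Ha.
  rewrite ip_subl !ip_subr (Lsym P Pr u a) in Hps.
  rewrite (@ip_ext R n pi u u (fun x => a x - app R n P a x) phi) // in Hps.
  rewrite (@ip_sym R n pi u phi) in Hps.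
  lra.
- move=> Hform f.
  set c := \sum_x pi x * f x.
  rewrite (asymp_shift P P1 f c) (asymp_shift Q Q1 f c).
  set phi := fun x => f x - c.
  have Hphi : \sum_x pi x * phi x = 0.
    rewrite /phi (eq_bigr (fun x => pi x * f x - pi x * c)); last by move=> x _; ring.
    by rewrite sumrB -mulr_suml pi_sum mul1r subrr.
  have [a Ha] := poisson P P0 P1 Pi Pr _ Hphi.
  have [b Hb] := poisson Q Q0 Q1 Qi Qr _ Hphi.
  rewrite (vformula P P0 P1 Pr _ _ Hphi Ha) (vformula Q Q0 Q1 Qr _ _ Hphi Hb).
  have Hps := psd Q Q0 Q1 Qr (fun x => a x - b x).
  rewrite (@ip_ext R n pi _ (fun x => (a x - app R n Q a x) - phi x) _ (fun x => a x - b x))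
    in Hps; last by []; last by move=> x; rewrite L_sub Hb.
  rewrite ip_subl !ip_subr (Lsym Q Qr a b) in Hps.
  rewrite (@ip_ext R n pi a a (fun x => b x - app R n Q b x) phi) // in Hps.
  rewrite (@ip_sym R n pi a phi) in Hps.
  have := Hform a; rewrite form_diff.
  rewrite (@ip_ext R n pi (fun x => a x - app R n P a x) phi a a) //.
  lra.
Qed.

End Main.

Section Spec.
Variable R : realType.
Notation "x %:CC" := ((x%:C)%C : R[i]) (at level 2, format "x %:CC").
Local Open Scope sesquilinear_scope.

Lemma real_CC (x : R) : x%:CC \is Num.real.
Proof.
rewrite realE; case: (lerP 0 x) => h; apply/orP; [left; by rewrite ler0c | right].
by move: (ltW h); rewrite -(@lecR R).
Qed.

Lemma conjR (x : R) : (x%:CC)^* = x%:CC.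
Proof. by rewrite conj_Creal // real_CC. Qed.

Lemma L0 (z w : R[i]) : z * w^* + w * z^* =
  ((complex.Re z * complex.Re w + complex.Im z * complex.Im w) *+ 2)%:CC.
Proof.
rewrite [z]complexE [w]complexE !rmorphD !rmorphM /= !conjR complexiE conjCi.
set a := complex.Re z. set b := complex.Im z. set c := complex.Re w. set d := complex.Im w.
have hI : 'i * 'i = -1 :> R[i] by rewrite -expr2 sqrCi.
transitivity (((a * c + b * d) *+ 2)%:CC + ('i * 'i + 1) * (- (2%:R * b%:CC * d%:CC))).
  rewrite rmorphMn rmorphD !rmorphM /=. ring.
rewrite hI addNr mul0r addr0.
ring.
Qed.

Variable n : nat.
Definition qf (N : 'M[R]_n) (u : 'I_n -> R) := \sum_x \sum_y u x * N x y * u y.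

Lemma eig_psd (N : 'M[R]_n) : (forall x y, N x y = N y x) ->
  (forall u, 0 <= qf N u) -> eigenvalues_nonneg N.
Proof.
move=> Nsym Hpsd a /eigenvalueP [v Hv vnz].
set S := \sum_y v 0 y * (v 0 y)^*.
set T := \sum_x \sum_y v 0 x * (N x y)%:CC * (v 0 y)^*.
have HT : T = a * S.
  rewrite /T exchange_big /S mulr_sumr; apply: eq_bigr => y _ /=.
  have /matrixP /(_ 0 y) := Hv; rewrite !mxE => Hy.
  rewrite -mulr_suml (eq_bigr (fun x => v 0 x * (map_mx (fun x : R => x%:CC) N) x y)).
    by rewrite Hy mulrA.
  by move=> x _; rewrite mxE.
set r := fun x => complex.Re (v 0 x).
set s := fun x => complex.Im (v 0 x).
set T' := \sum_x \sum_y v 0 y * (N x y)%:CC * (v 0 x)^*.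
have TT' : T' = T.
  rewrite /T' exchange_big; apply: eq_bigr => x _; apply: eq_bigr => y _ /=.
  by rewrite Nsym.
have E1 : T + T' = \sum_x \sum_y (N x y * ((r x * r y + s x * s y) *+ 2))%:CC.
  rewrite /T /T' -big_split; apply: eq_bigr => x _; rewrite -big_split.
  apply: eq_bigr => y _ /=; rewrite rmorphM /= /r /s -L0; ring.
have E2 : \sum_x \sum_y (N x y * ((r x * r y + s x * s y) *+ 2)) = (qf N r + qf N s) *+ 2.
  rewrite /qf -big_split /= -sumrMnl; apply: eq_bigr => x _ /=.
  rewrite -big_split /= -sumrMnl; apply: eq_bigr => y _ /=; ring.
have HT2 : T = (qf N r + qf N s)%:CC.
  apply: (@mulfI _ 2%:R); first by rewrite pnatr_eq0.
  rewrite !mulr_natl -rmorphMn /= -E2 rmorph_sum /=.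
  rewrite mulr2n -[X in _ + X]TT' E1; apply: eq_bigr => x _; by rewrite rmorph_sum.
have S_gt0 : 0 < S.
  have [y Hy] : exists y, v 0 y != 0.
    apply/existsP; apply: contraNT vnz; rewrite negb_exists => /forallP H.
    by apply/eqP/rowP => y; rewrite mxE; apply/eqP; move: (H y); rewrite negbK.
  rewrite /S (bigD1 y) //=; apply: ltr_wpDr; last by rewrite mul_conjC_gt0.
  by apply: sumr_ge0 => z _; exact: mul_conjC_ge0.
have -> : a = T / S by rewrite HT mulfK // lt0r_neq0.
apply: divr_ge0; last exact: ltW.
by rewrite HT2 ler0c addr_ge0.
Qed.

Lemma psd_eig (N : 'M[R]_n) : (forall x y, N x y = N y x) ->
  eigenvalues_nonneg N -> forall u, 0 <= qf N u.
Proof.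
move=> Nsym Heig u.
set NC := map_mx (fun x : R => x%:CC) N.
have Nn : NC \is normalmx.
  apply: symmetric_normalmx.
    by apply/is_hermitianmxP; rewrite expr0 scale1r; apply/matrixP => i j; rewrite !mxE Nsym.
  by apply/mxOverP => i j; rewrite mxE; exact: real_CC.
have /orthomx_spectralP HN := Nn.
set U := spectralmx NC in HN; set d := spectral_diag NC in HN.
have Uu : U \is unitarymx := spectral_unitarymx NC.
rewrite invmx_unitary // in HN.
have UU : U *m U^t* = 1%:M by apply/unitarymxP.
have deig i : 0 <= d 0 i.
  apply: Heig; apply/eigenvalueP; exists (row i U).
    have -> : row i U *m NC = row i (diag_mx d *m U).
      by rewrite -row_mul {1}HN !mulmxA UU mul1mx.
    by rewrite mul_diag_mx; apply/rowP => j; rewrite !mxE.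
  apply/eqP => H0; have := congr1 (row i) UU; rewrite row_mul H0 mul0mx.
  move/rowP /(_ i); rewrite !mxE eqxx /= => /eqP; by rewrite eq_sym oner_eq0.
have NCE x y : (N x y)%:CC = \sum_i (U i x)^* * d 0 i * U i y.
  have -> : (N x y)%:CC = NC x y by rewrite mxE.
  rewrite HN mxE; apply: eq_bigr => i _; by rewrite mul_mx_diag !mxE.
set w := fun i => \sum_x (u x)%:CC * (U i x)^*.
have wc i : (w i)^* = \sum_y U i y * (u y)%:CC.
  rewrite /w rmorph_sum; apply: eq_bigr => y _ /=; by rewrite rmorphM /= conjCK conjR mulrC.
have key : (qf N u)%:CC = \sum_i d 0 i * (w i * (w i)^*).
  rewrite /qf rmorph_sum.
  transitivity (\sum_x \sum_y \sum_i d 0 i * (((u x)%:CC * (U i x)^*) * (U i y * (u y)%:CC))).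
    apply: eq_bigr => x1 _; rewrite rmorph_sum; apply: eq_bigr => y1 _ /=.
    rewrite !rmorphM /= NCE mulr_sumr mulr_suml; apply: eq_bigr => k _; ring.
  rewrite (eq_bigr (fun x => \sum_k \sum_y d 0 k * (((u x)%:CC * (U k x)^*) * (U k y * (u y)%:CC)))); last first.
    by move=> x _; rewrite exchange_big.
  rewrite exchange_big; apply: eq_bigr => k _ /=.
  rewrite wc /w mulr_suml mulr_sumr; apply: eq_bigr => x _.
  rewrite mulr_sumr mulr_sumr; apply: eq_bigr => y _; ring.
rewrite -ler0c key; apply: sumr_ge0 => k _; apply: mulr_ge0 => //.
exact: mul_conjC_ge0.
Qed.

End Spec.

Lemma eig_scale (F : fieldType) (n : nat) (A B : 'M[F]_n) (t : 'I_n -> F) :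
  (forall x, t x != 0) -> (forall x y, B x y = t x * A x y / t y) ->
  forall a, eigenvalue A a -> eigenvalue B a.
Proof.
move=> tnz HB a /eigenvalueP [v Hv vnz]; apply/eigenvalueP.
exists (\row_x (v 0 x / t x)).
  apply/rowP => y; rewrite !mxE.
  have /matrixP /(_ 0 y) := Hv; rewrite !mxE => Hy.
  rewrite (eq_bigr (fun x => v 0 x * A x y / t y)); last first.
    by move=> x _; rewrite !mxE HB; field; rewrite !tnz.
  rewrite -(@mulr_suml _ _ _ _ (fun x => v 0 x * A x y)).
  by rewrite Hy mulrA.
apply: contraNneq vnz => H0; apply/eqP/rowP => x; rewrite mxE.
have /rowP /(_ x) := H0; rewrite !mxE => /eqP; rewrite mulf_eq0 invr_eq0 (negbTE (tnz x)) orbF.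
by move/eqP.
Qed.

Lemma eig_scaleR (R : realType) (n : nat) (A B : 'M[R]_n) (t : 'I_n -> R) :
  (forall x, t x != 0) -> (forall x y, B x y = t x * A x y / t y) ->
  forall a, eigenvalue (map_mx (fun x : R => (x%:C)%C) A) a ->
            eigenvalue (map_mx (fun x : R => (x%:C)%C) B) a.
Proof.
move=> tnz HB; apply: (@eig_scale _ _ _ _ (fun x => (t x)%:C%C)).
  by move=> x; rewrite fmorph_eq0.
by move=> x y; rewrite !mxE HB !rmorphM fmorphV.
Qed.

Theorem theorem2 (R : realType) (n : nat) (pi : 'I_n -> R) (P Q : 'M[R]_n) :
  positive_distribution pi ->
  transition_matrix P -> transition_matrix Q ->
  irreducible P -> irreducible Q ->
  reversible pi P -> reversible pi Q ->
  (efficiency_dominates pi P Q <-> eigenvalues_nonneg (Q - P)) /\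
  (eigenvalues_nonneg (Q - P) <-> eigenvalues_nonneg (diag_of pi *m (Q - P))).
Proof.
move=> [pi_pos pi_sum] [P0 P1] [Q0 Q1] Pi Qi Pr Qr.
have Hdom := @dom_iff R n pi pi_pos pi_sum P Q P0 P1 Pi Pr Q0 Q1 Qi Qr.
set A := Q - P.
have AE x y : A x y = Q x y - P x y by rewrite !mxE.
have Arev x y : pi x * A x y = pi y * A y x.
  by rewrite !AE !mulrBr Pr Qr.
set fm := fun u : 'I_n -> R => \sum_x \sum_y u x * (pi x * A x y) * u y.
have Hdom' : efficiency_dominates pi P Q <-> forall u, 0 <= fm u.
  have fmE u : fm u = \sum_x \sum_y u x * (pi x * (Q x y - P x y)) * u y.
    by apply: eq_bigr => x _; apply: eq_bigr => y _; rewrite AE.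
  by rewrite Hdom; split => H u; have := H u; rewrite fmE.
set s := fun x => Num.sqrt (pi x).
have s_gt0 x : 0 < s x by rewrite sqrtr_gt0.
have s_nz x : s x != 0 by rewrite lt0r_neq0.
have s2 x : s x ^+ 2 = pi x by rewrite sqr_sqrtr // ltW.
set N := \matrix_(x, y) (s x * A x y / s y) : 'M[R]_n.
have Nsym x y : N x y = N y x.
  rewrite !mxE -!AE.
  transitivity (s x ^+ 2 * A x y / (s x * s y)).
    by field; rewrite ?s_nz.
  by rewrite s2 Arev -s2; field; rewrite ?s_nz.
have qfN u : qf _ _ N (fun x => s x * u x) = fm u.
  rewrite /qf /fm; apply: eq_bigr => x _; apply: eq_bigr => y _.
  by rewrite mxE -s2; field; rewrite ?s_nz.
have psdN : (forall u, 0 <= qf _ _ N u) <-> (forall u, 0 <= fm u).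
  split => H w; first by rewrite -qfN.
  have := H (fun x => w x / s x); rewrite -qfN.
  have -> : (fun x => s x * (w x / s x)) = w.
    by apply: funext => x; field; rewrite ?s_nz.
  by [].
set DA := diag_of pi *m A.
have DAE x y : DA x y = pi x * A x y by rewrite /DA /diag_of mul_diag_mx !mxE.
have DAsym x y : DA x y = DA y x by rewrite !DAE Arev.
have qfDA u : qf _ _ DA u = fm u.
  by rewrite /qf /fm; apply: eq_bigr => x _; apply: eq_bigr => y _; rewrite DAE.
have eigDA : eigenvalues_nonneg DA <-> forall u, 0 <= fm u.
  split => H.
    by move=> u; rewrite -qfDA; apply: (@psd_eig R n DA DAsym).
  by apply: (@eig_psd R n DA DAsym) => u; rewrite qfDA.
have eigN : eigenvalues_nonneg N <-> forall u, 0 <= fm u.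
  rewrite -psdN; split => H; [exact: (@psd_eig R n N Nsym) | exact: (@eig_psd R n N Nsym)].
have eigAN : eigenvalues_nonneg A <-> eigenvalues_nonneg N.
  split => H a Ha; apply: H.
    apply: (@eig_scaleR R n N A (fun x => (s x)^-1)) Ha.
      by move=> x; rewrite invr_eq0.
    by move=> x y; rewrite [N x y]mxE; field; rewrite ?s_nz.
  apply: (@eig_scaleR R n A N s) Ha => // x y; by rewrite [N x y]mxE.
rewrite Hdom' -eigDA eigAN eigN eigDA; split; split => //.
Qed.
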